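(* Assume $q\neq0$. Let $i,j,k,l,r$ be integers with $i+j=k+l$. Then $$u_ih_j-u_kh_l=q^r\left(u_{i-r}h_{j-r}-u_{k-r}h_{l-r}\right)$$ and $$u_iw_j-u_kw_l=q^r\left(u_{i-r}w_{j-r}-u_{k-r}w_{l-r}\right).$$
   Context: Let $p,q,a,b$ be complex numbers with $q\neq0$. The sequence $(u_n)$ is defined by $u_0=0$, $u_1=1$, $u_n=pu_{n-1}-qu_{n-2}$. The Horadam sequence $(w_n)$ is defined by $w_0=a$, $w_1=b$, $w_n=pw_{n-1}-qw_{n-2}$. The Horadam-Lucas sequence $(h_n)$ is defined by $h_0=2b-ap$, $h_1=bp-2aq$, $h_n=ph_{n-1}-qh_{n-2}$. All are extended to all integer indices by $x_{n-2}=(px_{n-1}-x_n)/q$. *)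

(* Defs.v *)
From mathcomp Require Import all_boot all_order all_algebra.
From mathcomp Require Import all_reals.
From mathcomp Require Import complex.
Set Implicit Arguments. Unset Strict Implicit. Unset Printing Implicit Defensive.
Import Order.TTheory GRing.Theory Num.Theory.
Local Open Scope ring_scope.

Section Seqs.
Variable (F : fieldType) (p q : F).

Fixpoint fwd (x0 x1 : F) (n : nat) : F * F :=
  match n with
  | 0%N => (x0, x1)
  | n'.+1 => let: (a, b) := fwd x0 x1 n' in (b, p * b - q * a)
  end.

(* backward pair (x_{-n}, x_{-n+1}) for n : nat, using x_{m-2} = (p x_{m-1} - x_m)/q *)
Fixpoint bwd (x0 x1 : F) (n : nat) : F * F :=
  match n with
  | 0%N => (x0, x1)
  | n'.+1 => let: (a, b) := bwd x0 x1 n' in ((p * a - b) / q, a)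
  end.

(* second-order linear recurrence x_n = p x_{n-1} - q x_{n-2}, x_0 = x0, x_1 = x1,
   extended to all integer indices *)
Definition lrec (x0 x1 : F) (n : int) : F :=
  match n with
  | Posz m => (fwd x0 x1 m).1
  | Negz m => (bwd x0 x1 m.+1).1
  end.

Definition useq : int -> F := lrec 0 1.
Definition wseq (a b : F) : int -> F := lrec a b.
Definition hseq (a b : F) : int -> F := lrec (2 * b - a * p) (b * p - 2 * a * q).
End Seqs.

(* Main.v *)
Require Import Defs.
From mathcomp Require Import all_boot all_order all_algebra.
From mathcomp Require Import all_reals.
From mathcomp Require Import complex.
From mathcomp Require Import ring zify.
Import Order.TTheory GRing.Theory Num.Theory.
Local Open Scope ring_scope.

Section Aux.
Variable (F : fieldType) (p q : F).
Hypothesis hq : q != 0.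

Lemma lrec_rec x0 x1 (n : int) :
  lrec p q x0 x1 (n + 2) = p * lrec p q x0 x1 (n + 1) - q * lrec p q x0 x1 n.
Proof.
case: n => [m|[|[|m]]].
- have -> : Posz m + 2 = Posz m.+2 by rewrite -PoszD addn2.
  have -> : Posz m + 1 = Posz m.+1 by rewrite -PoszD addn1.
  rewrite /lrec /=; by case: (fwd p q x0 x1 m).
- rewrite /lrec /=. by field.
- rewrite /lrec /=. by field.
- have -> : Negz m.+2 + 2 = Negz m by rewrite !NegzE; lia.
  have -> : Negz m.+2 + 1 = Negz m.+1 by rewrite !NegzE; lia.
  rewrite /lrec /=.
  case: (bwd p q x0 x1 m) => a b /=. by field.
Qed.

Lemma shift_const (g : int -> F) : (forall t, g (t + 1) = g t) -> forall t, g t = g 0.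
Proof.
move=> H; have Hp : forall n : nat, g n = g 0.
  elim=> [//|n IH]; by rewrite -addn1 PoszD H.
case=> [n|n]; first exact: Hp.
elim: n => [|n IH]; first by rewrite -(H (Negz 0)).
have e : Negz n.+1 + 1 = Negz n by rewrite !NegzE; lia.
by rewrite -IH -(H (Negz n.+1)) e.
Qed.

Definition isrec (x : int -> F) := forall n, x (n + 2) = p * x (n + 1) - q * x n.

Definition E (y x : int -> F) a b := y (a + 1) * x (b + 1) - q * y a * x b.

Lemma E_step (y x : int -> F) : isrec y -> isrec x -> forall a c,
  E y x (a + 1) c = E y x a (c + 1).
Proof.
move=> Hy Hx a c; rewrite /E -!addrA /= (_ : 1 + 1 = 2) // Hy Hx; ring.
Qed.

Lemma E_shift (y x : int -> F) : isrec y -> isrec x -> forall a b t,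
  E y x (a + t) (b - t) = E y x a b.
Proof.
move=> Hy Hx a b t.
have := @shift_const (fun t => E y x (a + t) (b - t)).
rewrite addr0 subr0 => ->// {}t.
have -> : b - t = (b - (t + 1)) + 1 by rewrite opprD addrA addrNK.
by rewrite addrA E_step.
Qed.
Lemma main_gen (y x : int -> F) : isrec y -> isrec x -> forall i j k l r : int,
  i + j = k + l ->
  y i * x j - y k * x l = q ^ r * (y (i - r) * x (j - r) - y (k - r) * x (l - r)).
Proof.
move=> Hy Hx i j k l r hs.
pose f s := y (i - s) * x (j - s) - y (k - s) * x (l - s).
have step : forall s, f s = q * f (s + 1).
  move=> s; rewrite /f.
  have Hab : E y x (k - (s + 1)) (l - (s + 1)) = E y x (i - (s + 1)) (j - (s + 1)).
    rewrite -(E_shift y x Hy Hx _ _ ((i - (s + 1)) - (k - (s + 1)))).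
    congr (E y x _ _); lia.
  move: Hab; rewrite /E.
  have e1 : forall z : int, z - (s + 1) + 1 = z - s by move=> z; lia.
  rewrite !e1 => Hab.
  rewrite mulrBr !mulrA; apply/eqP; rewrite -subr_eq0; apply/eqP.
  have -> : y (i - s) * x (j - s) - y (k - s) * x (l - s) -
    (q * y (i - (s + 1)) * x (j - (s + 1)) - q * y (k - (s + 1)) * x (l - (s + 1)))
    = (y (i - s) * x (j - s) - q * y (i - (s + 1)) * x (j - (s + 1)))
      - (y (k - s) * x (l - s) - q * y (k - (s + 1)) * x (l - (s + 1))) by ring.
  by rewrite Hab subrr.
have := @shift_const (fun s => q ^ s * f s).
rewrite expr0z mul1r => -> //.
  by rewrite /f !subr0.
move=> t; rewrite expfzDr // expr1z (step t) mulrA.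
by [].
Qed.
End Aux.

Theorem mainTheorem16 (R : realType) (p q a b : R[i]) (i j k l r : int) :
  q != 0 -> i + j = k + l ->
  useq p q i * hseq p q a b j - useq p q k * hseq p q a b l
    = q ^ r * (useq p q (i - r) * hseq p q a b (j - r)
               - useq p q (k - r) * hseq p q a b (l - r))
  /\
  useq p q i * wseq p q a b j - useq p q k * wseq p q a b l
    = q ^ r * (useq p q (i - r) * wseq p q a b (j - r)
               - useq p q (k - r) * wseq p q a b (l - r)).
Proof.
move=> hq hs; split; apply: main_gen => // n; exact: lrec_rec.
Qed.
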